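(* If a finite simple graph $H$ has no odd cycle of length greater than $3$, then $H$ is a weak König–Egerváry graph.
   Context: A graph $H$ is a weak König–Egerváry graph if $H$ has a matching $M$ and a vertex set $Q \subseteq V(H)$ with $|Q| \leq |M|$ such that $Q$ is a vertex cover of $H - M$ (every edge of $H$ not in $M$ has an endpoint in $Q$). *)

(* Defs.v *)
From mathcomp Require Import all_boot.
Set Implicit Arguments. Unset Strict Implicit. Unset Printing Implicit Defensive.

Definition simple_graph (T : finType) (e : rel T) : Prop :=
  symmetric e /\ irreflexive e.

Definition is_cycle (T : finType) (e : rel T) (s : seq T) : Prop :=
  [/\ 3 <= size s, uniq s & cycle e s].

Definition is_matching (T : finType) (e : rel T) (M : {set {set T}}) : Prop :=
  (forall E, E \in M -> exists u v, e u v /\ E = [set u; v]) /\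
  (forall E F, E \in M -> F \in M -> E != F -> [disjoint E & F]).

Definition covers_minus (T : finType) (e : rel T) (M : {set {set T}})
    (Q : {set T}) : Prop :=
  forall u v, e u v -> [set u; v] \notin M -> (u \in Q) || (v \in Q).

Definition weak_KE (T : finType) (e : rel T) : Prop :=
  exists (M : {set {set T}}) (Q : {set T}),
    [/\ is_matching e M, #|Q| <= #|M| & covers_minus e M Q].

(* Main.v *)
Require Import Defs.
From mathcomp Require Import all_boot zify.
From Stdlib Require Import Classical.
Set Implicit Arguments. Unset Strict Implicit. Unset Printing Implicit Defensive.

Definition cov {T : finType} (m : rel T) : {set T} := [set x | [exists y, m x y]].
Definition matching {T : finType} (e m : rel T) :=
  [/\ subrel m e, symmetric m & forall x y z, m x y -> m x z -> y = z].
Definition delv {T : finType} (r : rel T) v : rel T :=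
  fun a b => [&& r a b, a != v & b != v].
Definition dele {T : finType} (r : rel T) u w : rel T :=
  fun a b => r a b && ~~ ((a == u) && (b == w) || (a == w) && (b == u)).
Definition addp {T : finType} (r : rel T) u w : rel T :=
  fun a b => r a b || ((a == u) && (b == w) || (a == w) && (b == u)).

Fixpoint altw {T : finType} (e m : rel T) (b : bool) (x : T) (s : seq T) : bool :=
  if s is y :: s' then [&& e x y, m x y == b & altw e m (~~ b) y s'] else true.

Definition AP {T : finType} (e m : rel T) x s :=
  [&& altw e m false x s, odd (size s), uniq (x :: s), x \notin cov m
    & last x s \notin cov m].

Lemma covP {T : finType} (m : rel T) x : reflect (exists y, m x y) (x \in cov m).
Proof. rewrite inE; exact: existsP. Qed.

Lemma altw_path {T : finType} (e m : rel T) b x s : altw e m b x s -> path e x s.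
Proof.
elim: s b x => //= y s IH b x /and3P [-> _ H] /=; exact: IH H.
Qed.

Lemma altw_rcons {T : finType} (e m : rel T) b x s y :
  altw e m b x (rcons s y) =
  [&& altw e m b x s, e (last x s) y & m (last x s) y == b (+) odd (size s)].
Proof.
elim: s b x => [|z s IH] b x /=; first by rewrite addbF andbT.
rewrite IH /=. case: (e x z) => //=. case: (m x z == b) => //=.
by rewrite addbN addNb.
Qed.

Lemma altw_rev {T : finType} (e m : rel T) b x s :
  symmetric e -> symmetric m -> altw e m b x s ->
  altw e m (b (+) ~~ odd (size s)) (last x s) (rev (belast x s)).
Proof.
move=> se sm; elim/last_ind: s => [|s y IH] //=.
rewrite altw_rcons => /and3P [H1 H2 H3].
rewrite last_rcons belast_rcons size_rcons /=.
rewrite lastI rev_rcons /=.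
rewrite se H2 /= sm.
have -> : b (+) ~~ ~~ odd (size s) = b (+) odd (size s) by rewrite negbK.
rewrite H3 /=.
have -> : ~~ (b (+) odd (size s)) = b (+) ~~ odd (size s) by rewrite addbN.
exact: IH.
Qed.

Lemma covI {T : finType} (m : rel T) x y : m x y -> x \in cov m.
Proof. by move=> H; rewrite inE; apply/existsP; exists y. Qed.
Lemma covE {T : finType} (m : rel T) x : x \in cov m -> exists y, m x y.
Proof. by rewrite inE => /existsP. Qed.

Lemma rev_cons_last {T : Type} (x : T) s : rev (x :: s) = last x s :: rev (belast x s).
Proof. by rewrite lastI rev_rcons. Qed.

Lemma AP_rev {T : finType} (e m : rel T) x s :
  symmetric e -> symmetric m -> AP e m x s -> AP e m (last x s) (rev (belast x s)).
Proof.
move=> se sm /and5P [H1 H2 H3 H4 H5].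
have E : last x s :: rev (belast x s) = rev (x :: s) by rewrite rev_cons_last.
have L : last (last x s) (rev (belast x s)) = x.
  by rewrite -[last _ (rev _)]/(last x (last x s :: rev (belast x s))) E rev_cons last_rcons.
apply/and5P; split => //.
- by have := altw_rev se sm H1; rewrite H2.
- by rewrite size_rev size_belast.
- by rewrite E rev_uniq.
- by rewrite L.
Qed.

Lemma altw_inner {T : finType} (e m : rel T) x s :
  symmetric m -> altw e m false x s -> odd (size s) ->
  forall v, v \in s -> v != last x s -> v \in cov m.
Proof.
move=> sm; move: {2}(size s) (leqnn (size s)) => n.
elim: n x s => [|n IH] x [|y [|y' s]] //= Hs.
- by move=> _ _ v; rewrite inE => /eqP ->; rewrite eqxx.
- move=> /and3P [_ _ /and3P [_ Hm H]] Ho v.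
  rewrite 2!in_cons => /orP [/eqP ->|/orP [/eqP ->|Hv]] Hl.
  + by apply: (covI (y:=y')); rewrite (eqP Hm).
  + by apply: (covI (y:=y)); rewrite sm (eqP Hm).
  + apply: (IH y' s) => //; first by move: Hs; rewrite ltnS => /ltnW.
    by move: Ho; rewrite /= negbK.
Qed.

Lemma altw_lift {T : finType} (e e' m m' : rel T) b x s :
  (forall u v, u \in x :: s -> v \in x :: s -> e' u v -> e u v) ->
  (forall u v, u \in x :: s -> v \in x :: s -> m' u v = m u v) ->
  altw e' m' b x s -> altw e m b x s.
Proof.
elim: s b x => [|y s IH] b x //= He Hm /and3P [H1 H2 H3].
rewrite (He x y) ?inE ?eqxx ?orbT //= -(Hm x y) ?inE ?eqxx ?orbT // H2 /=.
apply: IH H3 => u v Hu Hv.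
- by apply: He; rewrite inE ?Hu ?Hv orbT.
- by apply: Hm; rewrite inE ?Hu ?Hv orbT.
Qed.

Lemma in_cov_delv {T : finType} (e m : rel T) v a : matching e m ->
  (a \in cov (delv m v)) = [&& a \in cov m, a != v & ~~ m a v].
Proof.
case=> _ sm um; apply/idP/idP.
- move/covE => [b /and3P [Hab Hav Hbv]]; rewrite (covI Hab) Hav /=.
  by apply/negP => Hv; move: Hbv; rewrite (um _ _ _ Hab Hv) eqxx.
- move=> /and3P [/covE [b Hab] Hav Hmv]; apply: (covI (y:=b)).
  rewrite /delv Hab Hav /=; apply/negP => /eqP Hb; by rewrite -Hb Hab in Hmv.
Qed.

Lemma cov_delv {T : finType} (e m : rel T) v w : matching e m -> m v w ->
  cov (delv m v) = cov m :\: [set v; w].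
Proof.
move=> Hm Hvw; have [_ sm um] := Hm.
apply/setP => a; rewrite (in_cov_delv _ _ Hm) in_setD in_set2 negb_or.
case Ha: (a \in cov m); rewrite ?andbF ?andbT //.
case: (a =P v) => [->|/eqP Hav] /=; first by [].
case: (a =P w) => [->|/eqP Haw] /=; first by rewrite sm Hvw.
apply/negP => Hav'; move/eqP: Haw; apply; have H1 : m v a by rewrite sm.
exact: esym (um _ _ _ Hvw H1).
Qed.

Lemma cov_delv_free {T : finType} (m : rel T) v : symmetric m -> v \notin cov m ->
  cov (delv m v) = cov m.
Proof.
move=> sm Hv; apply/setP => a; apply/idP/idP.
- by move/covE => [b /and3P [Hab _ _]]; exact: covI Hab.
- move/covE => [b Hab]; apply: (covI (y:=b)); rewrite /delv Hab /=.
  apply/andP; split; apply/negP => /eqP E; subst.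
  + by rewrite (covI Hab) in Hv.
  + by rewrite sm in Hab; rewrite (covI Hab) in Hv.
Qed.

Lemma matching_sub {T : finType} (e e' m : rel T) :
  (forall a b, m a b -> e a b -> e' a b) -> matching e m -> matching e' m.
Proof. by move=> H [s1 s2 s3]; split => // a b Hab; apply: H => //; apply: s1. Qed.

Lemma matching_delv {T : finType} (e m : rel T) v :
  matching e m -> matching (delv e v) (delv m v).
Proof.
case=> s1 s2 s3; split.
- by move=> a b /and3P [H1 H2 H3]; rewrite /delv (s1 _ _ H1) H2 H3.
- by move=> a b; rewrite /delv s2; congr (_ && _); exact: andbC.
- by move=> x y z /and3P [H1 _ _] /and3P [H2 _ _]; apply: s3 H1 H2.
Qed.

Lemma matching_delv' {T : finType} (e m : rel T) v :
  matching e m -> matching e (delv m v).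
Proof.
case=> s1 s2 s3; split.
- by move=> a b /and3P [H1 H2 H3]; apply: s1.
- by move=> a b; rewrite /delv s2; congr (_ && _); exact: andbC.
- by move=> x y z /and3P [H1 _ _] /and3P [H2 _ _]; apply: s3 H1 H2.
Qed.

Lemma in_cov_addp {T : finType} (m : rel T) u w a :
  (a \in cov (addp m u w)) = [|| a \in cov m, a == u | a == w].
Proof.
apply/idP/idP.
- move/covE => [b]; rewrite /addp => /orP [H|/orP [/andP [/eqP -> _]|/andP [/eqP -> _]]].
  + by rewrite (covI H).
  + by rewrite eqxx orbT.
  + by rewrite eqxx !orbT.
- move=> /orP [/covE [b H]|/orP [/eqP ->|/eqP ->]].
  + by apply: (covI (y:=b)); rewrite /addp H.
  + by apply: (covI (y:=w)); rewrite /addp !eqxx /= orbT.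
  + by apply: (covI (y:=u)); rewrite /addp !eqxx /= !orbT.
Qed.

Lemma matching_addp {T : finType} (e m : rel T) u w :
  symmetric e -> matching e m -> e u w -> u \notin cov m -> w \notin cov m ->
  u != w -> matching e (addp m u w).
Proof.
move=> se [s1 s2 s3] Huw Hu Hw Hne; split.
- move=> a b; rewrite /addp => /orP [H|/orP [/andP [/eqP -> /eqP ->]|/andP [/eqP -> /eqP ->]]].
  + exact: s1.
  + exact: Huw.
  + by rewrite se.
- move=> a b; rewrite /addp s2; congr (_ || _); by rewrite orbC [(b == u) && _]andbC [(b == w) && _]andbC.
- have Fu b : m u b = false by apply/negP => H; rewrite (covI H) in Hu.
  have Fw b : m w b = false by apply/negP => H; rewrite (covI H) in Hw.
  move=> x y z; rewrite /addp.
  case: (x =P u) => [->|Hxu]; first by rewrite !Fu (negbTE Hne) /= ?orbF => /eqP -> /eqP ->.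

  case: (x =P w) => [->|Hxw]; first by rewrite !Fw /= ?orbF => /eqP -> /eqP ->.
  rewrite /= ?andbF ?orbF; exact: s3.
Qed.

Lemma card_cov_addp {T : finType} (m : rel T) u w :
  u \notin cov m -> w \notin cov m -> u != w ->
  #|cov (addp m u w)| = #|cov m| + 2.
Proof.
move=> Hu Hw Hne.
have -> : cov (addp m u w) = u |: (w |: cov m).
  by apply/setP => a; rewrite in_cov_addp !in_setU1; case: (a \in cov m); case: (a == u); case: (a == w).
rewrite cardsU1 cardsU1 !in_setU1 (negbTE Hne) (negbTE Hu) (negbTE Hw) /=.
lia.
Qed.

Lemma card_cov_delv {T : finType} (e m : rel T) v w : matching e m -> m v w -> v != w ->
  #|cov (delv m v)| + 2 = #|cov m|.
Proof.
move=> Hm Hvw Hne; have [s1 sm _] := Hm.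
have Hs : [set v; w] \subset cov m.
  apply/subsetP => a; rewrite in_set2 => /orP [] /eqP ->.
  - exact: covI Hvw.
  - by apply: (covI (y:=v)); rewrite sm.
rewrite (cov_delv Hm Hvw) cardsDS // cards2 Hne.
have := subset_leq_card Hs; rewrite cards2 Hne; lia.
Qed.

Lemma flip {T : finType} (e m : rel T) x s : symmetric e -> matching e m ->
  AP e m x s -> exists n, matching e n /\ #|cov m| < #|cov n|.
Proof.
move=> se; move: {2}(size s) (leqnn (size s)) => k.
elim: k m x s => [|k IH] m x [|y [|y' s]] //= Hs Hm.
- case/and5P => /and3P [Hxy _ _] _ Hu Hx Hy.
  move: Hu; rewrite /= inE andbT => Hne.
  exists (addp m x y); split; first exact: matching_addp.
  rewrite card_cov_addp //. lia.
- move=> /and5P [/and3P [Hxy /eqP Hmxy /and3P [Hyy' /eqP Hmyy' Halt]] Ho Hu Hx Hl].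
  have {}Halt : altw e m false y' s := Halt.
  have [s1 sm um] := Hm.
  move: Hu; rewrite cons_uniq in_cons negb_or => /andP [/andP [Hxy0 Hxs]].
  rewrite cons_uniq in_cons negb_or => /andP [/andP [Hyy'0 Hys]].
  rewrite cons_uniq => /andP [Hy's Hus].
  move: Hxs; rewrite in_cons negb_or => /andP [Hxy'0 Hxs].
  set m1 := delv m y.
  have Hm1 : matching e m1 by exact: matching_delv'.
  have Ecov : cov m1 = cov m :\: [set y; y'] by exact: cov_delv.
  have Hx1 : x \notin cov m1 by rewrite Ecov in_setD negb_and Hx orbT.
  have Hy1 : y \notin cov m1 by rewrite Ecov in_setD in_set2 eqxx.
  set m2 := addp m1 x y.
  have Hm2 : matching e m2 by exact: matching_addp.
  have C1 : #|cov m1| + 2 = #|cov m| by exact: (card_cov_delv Hm Hmyy' Hyy'0).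
  have C2 : #|cov m2| = #|cov m1| + 2 by exact: card_cov_addp.
  have Hxm : x \notin y' :: s by rewrite in_cons negb_or Hxy'0.
  have Hym : y \notin y' :: s by rewrite in_cons negb_or Hyy'0.
  have Heq : forall u v, u \in y' :: s -> v \in y' :: s -> m u v = m2 u v.
    move=> u v Hu Hv.
    have Hux : (u == x) = false by apply/negP => /eqP E; rewrite -E Hu in Hxm.
    have Hvx : (v == x) = false by apply/negP => /eqP E; rewrite -E Hv in Hxm.
    have Huy : (u != y) by apply/negP => /eqP E; rewrite -E Hu in Hym.
    have Hvy : (v != y) by apply/negP => /eqP E; rewrite -E Hv in Hym.
    by rewrite /m2 /addp /m1 /delv Huy Hvy Hux Hvx /= ?andbT ?andbF ?orbF.
  have HAP : AP e m2 y' s.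
    apply/and5P; split.
    - apply: (altw_lift (e' := e) (m' := m)) Halt => // u v Hu Hv; exact: Heq.
    - by move: Ho; rewrite /= negbK.
    - by rewrite cons_uniq Hy's Hus.
    - rewrite in_cov_addp Ecov in_setD in_set2 eqxx orbT /= negb_or.
      by rewrite eq_sym Hxy'0 eq_sym Hyy'0.
    - have Hlm : last y' s \in y' :: s by exact: mem_last.
      rewrite in_cov_addp negb_or negb_or; apply/and3P; split.
      + by rewrite Ecov in_setD negb_and Hl orbT.
      + by apply/negP => /eqP E; move: Hlm; rewrite E (negbTE Hxm).
      + by apply/negP => /eqP E; move: Hlm; rewrite E (negbTE Hym).
  have [n [Hn Hc]] := IH m2 y' s (ltnW Hs) Hm2 HAP.
  exists n; split => //. by rewrite -C1 -C2.
Qed.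

Lemma sym_delv {T : finType} (e : rel T) v : symmetric e -> symmetric (delv e v).
Proof. by move=> se a b; rewrite /delv se; congr (_ && _); exact: andbC. Qed.

Lemma irr_delv {T : finType} (e : rel T) v : irreflexive e -> irreflexive (delv e v).
Proof. by move=> ie a; rewrite /delv ie. Qed.

Lemma sym_addp {T : finType} (e : rel T) u w : symmetric e -> symmetric (addp e u w).
Proof.
move=> se a b; rewrite /addp se; congr (_ || _).
by rewrite orbC [(b == u) && _]andbC [(b == w) && _]andbC.
Qed.

Lemma irr_addp {T : finType} (e : rel T) u w : irreflexive e -> u != w ->
  irreflexive (addp e u w).
Proof.
move=> ie Hne a; rewrite /addp ie /=.
by apply/negP => /orP [] /andP [/eqP -> /eqP E]; move: Hne; rewrite E eqxx.
Qed.

Lemma path_mem_edge {T : finType} (e : rel T) y s v : symmetric e -> path e y s ->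
  s != [::] -> v \in y :: s -> exists u, e v u.
Proof.
move=> se; elim: s y => [|z s IH] y; first by [].
move=> /= /andP [Hyz Hp] _.
rewrite in_cons => /orP [/eqP ->|Hv]; first by exists z.
case: s IH Hp Hv => [|z' s] IH Hp Hv.
- by move: Hv; rewrite inE => /eqP ->; exists y; rewrite se.
- by apply: (IH z Hp).
Qed.

Lemma cov_delv2 {T : finType} (e m : rel T) x x' : matching e m -> m x x' ->
  cov (delv (delv m x) x') = cov m :\: [set x; x'].
Proof.
move=> Hm Hxx'; have [_ sm _] := Hm.
rewrite cov_delv_free; first exact: (cov_delv Hm Hxx').
- exact: sym_delv.
- by rewrite (cov_delv Hm Hxx') in_setD in_set2 eqxx orbT.
Qed.

Lemma card_cov_delv2 {T : finType} (e m : rel T) x x' : matching e m -> m x x' -> x != x' ->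
  #|cov (delv (delv m x) x')| + 2 = #|cov m|.
Proof.
move=> Hm Hxx' Hne; have [_ sm _] := Hm.
rewrite cov_delv_free; first exact: (card_cov_delv Hm Hxx').
- exact: sym_delv.
- by rewrite (cov_delv Hm Hxx') in_setD in_set2 eqxx orbT.
Qed.

Lemma AP_lift {T : finType} (e e' m m' : rel T) x s :
  (forall u v, u \in x :: s -> v \in x :: s -> e' u v -> e u v) ->
  (forall u v, u \in x :: s -> v \in x :: s -> m' u v = m u v) ->
  x \notin cov m -> last x s \notin cov m ->
  AP e' m' x s -> AP e m x s.
Proof.
move=> He Hm Hx Hl /and5P [H1 H2 H3 _ _]; apply/and5P; split => //.
exact: altw_lift H1.
Qed.

Lemma AP_endpoint {T : finType} (e m : rel T) x s a :
  symmetric e -> symmetric m -> AP e m x s -> a \in x :: s -> a \notin cov m ->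
  exists s0, AP e m a s0 /\ (forall v, (v \in a :: s0) = (v \in x :: s)).
Proof.
move=> se sm HA Ha Hac.
have [H1 H2 H3 H4 H5] := and5P HA.
case: (a =P x) => [->|Hax]; first by exists s.
have Hal : a = last x s.
  apply/eqP; apply: contraNT Hac => Hne.
  apply: (altw_inner sm H1 H2) => //.
  by move: Ha; rewrite in_cons => /orP [/eqP E|//]; exfalso; apply: Hax.
exists (rev (belast x s)); split.
- by rewrite Hal; exact: AP_rev.
- by move=> v; rewrite Hal -rev_cons_last mem_rev.
Qed.

Lemma avoid_delv {T : finType} (e m : rel T) x s v w :
  symmetric e -> AP e m x s ->
  (forall u, e w u = false) -> v \in x :: s -> v != w.
Proof.
move=> se /and5P [H1 H2 _ _ _] Hw Hv.
have Hs : s != [::] by case: s H2 {H1 Hv}.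
have [u Hu] := path_mem_edge se (altw_path H1) Hs Hv.
by apply/negP => /eqP E; rewrite E Hw in Hu.
Qed.

Lemma arith1 p q k : p + 2 = q -> q = k -> p < k.
Proof. lia. Qed.
Lemma arith2 p q r t u w : p + 2 = q -> r = t + 2 -> t + 2 = u -> u + 2 = w -> q < w -> p < r.
Proof. lia. Qed.

Lemma arith3 p q r t : p + 2 = q -> t <= r + 2 -> q < t -> p < r.
Proof. lia. Qed.

Lemma berge {T : finType} k : forall (e m n : rel T), #|cov m| = k ->
  symmetric e -> irreflexive e -> matching e m -> matching e n ->
  #|cov m| < #|cov n| -> exists x s, AP e m x s.
Proof.
elim/ltn_ind: k => k IH e m n Hk se ie Hm Hn Hlt.
have [s1 sm um] := Hm; have [t1 tn un] := Hn.
case: (boolP (cov m \subset cov n)) => Hsub.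
-
  have [a Han Ham] : exists2 a, a \in cov n & a \notin cov m.
    apply/subsetPn; apply: contraL Hlt => H; rewrite -leqNgt; exact: subset_leq_card.
  have [b Hab] := covE Han.
  have Hab0 : a != b by apply/negP => /eqP E; have := t1 _ _ Hab; rewrite E ie.
  case: (boolP (b \in cov m)) => Hbm; last first.
    exists a, [:: b]; apply/and5P; split => //=.
    + rewrite (t1 _ _ Hab) /= andbT eqbF_neg; apply: contra Ham => H; exact: covI H.
    + by rewrite inE Hab0.
  have [b' Hbb'] := covE Hbm.
  have Hb'nn : b' \in cov n by apply: (subsetP Hsub); apply: (covI (y:=b)); rewrite sm.
  have [c Hb'c] := covE Hb'nn.
  have Hbb'0 : b != b' by apply/negP => /eqP E; have := s1 _ _ Hbb'; rewrite E ie.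
  have Hb'c0 : b' != c by apply/negP => /eqP E; have := t1 _ _ Hb'c; rewrite E ie.
  have Hab'0 : a != b' by apply/negP => /eqP E; rewrite E in Ham; rewrite (covI (y:=b)) // sm in Ham.
  have Hcb0 : c != b.
    apply/negP => /eqP E; rewrite E tn in Hb'c; move: Hab'0.
    by rewrite (un _ _ _ Hb'c (etrans (tn _ _) Hab)) eqxx.
  have Hca0 : c != a.
    apply/negP => /eqP E; rewrite E tn in Hb'c; move: Hbb'0.
    by rewrite (un _ _ _ Hab Hb'c) eqxx.
  set E0 := delv (delv e b) b'.
  set e' := addp E0 a c.
  set m' := delv (delv m b) b'.
  set N := delv (delv n b) b'.
  set n' := addp N a c.
  have se0 : symmetric E0 by do 2 apply: sym_delv.
  have se' : symmetric e' by apply: sym_addp.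
  have ie' : irreflexive e' by apply: irr_addp; [do 2 apply: irr_delv | rewrite eq_sym].
  have sub0 : forall u v, E0 u v -> e' u v by move=> u v H; rewrite /e' /addp H.
  have Hm' : matching e' m'.
    apply: (matching_sub (e := E0)); first by move=> u v _; exact: sub0.
    by do 2 apply: matching_delv.
  have HN0 : matching E0 N by do 2 apply: matching_delv.
  have HN : matching e' N by apply: (matching_sub (e := E0)) HN0 => u v _; exact: sub0.
  have Hnb : matching e (delv n b) by exact: matching_delv'.
  have Hba : n b a by rewrite tn.
  have Hb'c1 : delv n b b' c by rewrite /delv Hb'c eq_sym Hbb'0 Hcb0.
  have covN : cov N = (cov n :\: [set b; a]) :\: [set b'; c].
    by rewrite /N (cov_delv Hnb Hb'c1) (cov_delv Hn Hba).
  have HaN : a \notin cov N by rewrite covN !in_setD !in_set2 eqxx !orbT /= andbF.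
  have HcN : c \notin cov N by rewrite covN !in_setD !in_set2 eqxx !orbT.
  have He'ac : e' a c by rewrite /e' /addp !eqxx /= orbT.
  have Hn' : matching e' n' by apply: matching_addp => //; rewrite eq_sym.
  have Cn1 : #|cov n'| = #|cov N| + 2 by apply: card_cov_addp => //; rewrite eq_sym.
  have Cn2 : #|cov N| + 2 = #|cov (delv n b)| by apply: (card_cov_delv Hnb Hb'c1).
  have Cn3 : #|cov (delv n b)| + 2 = #|cov n| by apply: (card_cov_delv Hn Hba); rewrite eq_sym.
  have Cm : #|cov m'| + 2 = #|cov m| by apply: (card_cov_delv2 Hm Hbb').
  have [x [s HA]] : exists x s, AP e' m' x s.
    have L1 : #|cov m'| < k by apply: (arith1 Cm Hk).
    have L2 : #|cov m'| < #|cov n'| by apply: (arith2 Cm Cn1 Cn2 Cn3 Hlt).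
    exact: (IH #|cov m'| L1 e' m' n').
  have Hbad : forall v, v \in x :: s -> (v != b) && (v != b').
    move=> v Hv; apply/andP; split.
    - apply: (avoid_delv se' HA _ Hv) => u.
      by rewrite /e' /addp /E0 /delv eqxx /= [b == a]eq_sym [b == c]eq_sym (negbTE Hab0) (negbTE Hcb0) /= andbF.
    - apply: (avoid_delv se' HA _ Hv) => u.
      by rewrite /e' /addp /E0 /delv eqxx /= [b' == a]eq_sym (negbTE Hab'0) (negbTE Hb'c0) /= !andbF.
  have covm' : cov m' = cov m :\: [set b; b'] by apply: (cov_delv2 Hm Hbb').
  have Hfree : forall v, (v != b) && (v != b') -> v \notin cov m' -> v \notin cov m.
    move=> v /andP [H1 H2]; rewrite covm' in_setD in_set2 (negbTE H1) (negbTE H2) /=.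
    by [].
  have Hm'eq : forall u v, (u != b) && (u != b') -> (v != b) && (v != b') -> m' u v = m u v.
    move=> u v /andP [H1 H2] /andP [H3 H4]; by rewrite /m' /delv H1 H2 H3 H4 /= !andbT.
  have He'eq : forall u v, u != a -> v != a -> e' u v -> e u v.
    move=> u v H1 H2; rewrite /e' /addp (negbTE H1) (negbTE H2) /= !andbF /= orbF.
    by move=> /and3P [/and3P [H _ _] _ _].
  have tail_lift : forall bb q r, (forall v, v \in q :: r -> [&& v != a, v != b & v != b']) ->
      altw e' m' bb q r -> altw e m bb q r.
    move=> bb q r Hv; apply: altw_lift => u v Hu Hv'.
    - by have /and3P [? _ _] := Hv _ Hu; have /and3P [? _ _] := Hv _ Hv'; apply: He'eq.
    - by have /and3P [_ ? ?] := Hv _ Hu; have /and3P [_ ? ?] := Hv _ Hv'; apply: Hm'eq; apply/andP.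
  have [_ _ _ Hx Hl] := and5P HA.
  case: (boolP (a \in x :: s)) => Hapath; last first.
    exists x, s; apply: (AP_lift (e' := e') (m' := m')) => //.
    - move=> u v Hu Hv; apply: He'eq; apply/negP => /eqP E; subst; by rewrite ?Hu ?Hv in Hapath.
    - by move=> u v Hu Hv; apply: Hm'eq; apply: Hbad.
    - by apply: Hfree => //; apply: Hbad; rewrite mem_head.
    - by apply: Hfree => //; apply: Hbad; exact: mem_last.
  have Ham' : a \notin cov m' by rewrite covm' in_setD negb_and Ham orbT.
  have sm' : symmetric m' by case: Hm'.
  have [s0 [HA0 Hmem]] := AP_endpoint se' sm' HA Hapath Ham'.
  have [H01 H02 H03 H04 H05] := and5P HA0.
  case: s0 HA0 Hmem H01 H02 H03 H04 H05 => [|q r] HA0 Hmem H01 H02 H03 H04 H05 //.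
  have Hqr : forall v, v \in q :: r -> [&& v != a, v != b & v != b'].
    move=> v Hv; have Hv' : v \in x :: s by rewrite -Hmem in_cons Hv orbT.
    rewrite Hbad // andbT; apply/negP => /eqP E; subst v.
    by move: H03; rewrite cons_uniq Hv.
  move: H01 => /= /and3P [Heaq Hmaq Htail].
  have Hlast : last a (q :: r) \notin cov m.
    by apply: Hfree => //; apply: Hbad; rewrite -Hmem; exact: mem_last.
  case: (q =P c) => [Eq|Hqc].
  + subst q. exists a, [:: b, b', c & r]; apply/and5P; split => //.
    * rewrite /= (t1 _ _ Hab) (s1 _ _ Hbb') Hbb' (t1 _ _ Hb'c) /=.
      rewrite eqbF_neg; apply/andP; split; first by apply: contra Ham => H; exact: covI H.
      rewrite eqbF_neg; apply/andP; split.
        by apply/negP => H; move: Hcb0; rewrite sm in Hbb'; rewrite -(um _ _ _ Hbb' H) eqxx.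
      exact: tail_lift Htail.
    * by move: H02; rewrite /= negbK.
    * have Hbn : b \notin c :: r.
        by apply/negP => H; have := Hqr _ H; rewrite eqxx andbF.
      have Hbpn : b' \notin c :: r.
        by apply/negP => H; have := Hqr _ H; rewrite eqxx !andbF.
      move: H03; rewrite cons_uniq => /andP [Hacr Hucr].
      have E : uniq [:: a, b, b', c & r] = [&& a \notin [:: b, b' & c :: r], b \notin b' :: c :: r,
          b' \notin c :: r & uniq (c :: r)] by [].
      rewrite E; apply/and4P; split => //.
      - by rewrite in_cons negb_or Hab0 /= in_cons negb_or Hab'0 /= Hacr.
      - by rewrite in_cons negb_or Hbb'0 Hbn.
  + exists a, (q :: r); apply/and5P; split => //.
    rewrite /= -/(altw e m true q r) tail_lift // andbT.
    apply/andP; split; last by rewrite eqbF_neg; apply: contra Ham => H; exact: covI H.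
    move: Heaq; rewrite /e' /addp eqxx /=; move/eqP/negbTE: Hqc => ->.
    rewrite eq_sym (negbTE Hca0) /= orbF; by case/and3P => /and3P [].
- move/subsetPn: Hsub => [x Hxm Hxn].
  have [x' Hxx'] := covE Hxm.
  have Hxx'0 : x != x' by apply/negP => /eqP E; have := s1 _ _ Hxx'; rewrite E ie.
  set e' := delv (delv e x) x'.
  set m' := delv (delv m x) x'.
  set n1 := delv n x.
  set n' := delv n1 x'.
  have se' : symmetric e' by do 2 apply: sym_delv.
  have ie' : irreflexive e' by do 2 apply: irr_delv.
  have Hm' : matching e' m' by do 2 apply: matching_delv.
  have Hn' : matching e' n' by do 2 apply: matching_delv.
  have Hn1 : matching e n1 by exact: matching_delv'.
  have Cm : #|cov m'| + 2 = #|cov m| by apply: (card_cov_delv2 Hm Hxx').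
  have Cn1 : cov n1 = cov n by apply: cov_delv_free.
  have Cn : #|cov n| <= #|cov n'| + 2.
    have [_ sn1 _] := Hn1.
    case: (boolP (x' \in cov n1)) => Hx'.
    - have [p Hp] := covE Hx'.
      have Hx'p : x' != p by apply/negP => /eqP E; have := (matching_sub (fun _ _ _ H => H) Hn1); case=> [t _ _]; have := t _ _ Hp; rewrite -E ie.
      have := card_cov_delv Hn1 Hp Hx'p; rewrite -/n' Cn1 => <-; exact: leqnn.
    - by rewrite /n' cov_delv_free // Cn1 leq_addr.
  have [y [s HA]] : exists y s, AP e' m' y s.
    have L1 : #|cov m'| < k by apply: (arith1 Cm Hk).
    have L2 : #|cov m'| < #|cov n'| by apply: (arith3 Cm Cn Hlt).
    exact: (IH #|cov m'| L1 e' m' n').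
  have Hbad : forall v, v \in y :: s -> (v != x) && (v != x').
    move=> v Hv; apply/andP; split.
    - apply: (avoid_delv se' HA _ Hv) => u.
      by rewrite /e' /delv eqxx /= andbF.
    - apply: (avoid_delv se' HA _ Hv) => u.
      by rewrite /e' /delv eqxx /= !andbF.
  have covm' : cov m' = cov m :\: [set x; x'] by apply: (cov_delv2 Hm Hxx').
  have Hfree : forall v, (v != x) && (v != x') -> v \notin cov m' -> v \notin cov m.
    move=> v /andP [H1 H2]; rewrite covm' in_setD in_set2 (negbTE H1) (negbTE H2) /=.
    by [].
  have [_ _ _ Hy Hl] := and5P HA.
  exists y, s; apply: (AP_lift (e' := e') (m' := m')) => //.
  - by move=> u v _ _; case/and3P => /and3P [].
  - move=> u v Hu Hv; have /andP [H1 H2] := Hbad _ Hu; have /andP [H3 H4] := Hbad _ Hv.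
    by rewrite /m' /delv H1 H2 H3 H4 /= !andbT.
  - by apply: Hfree => //; apply: Hbad; rewrite mem_head.
  - by apply: Hfree => //; apply: Hbad; exact: mem_last.
Qed.

Definition nolong {T : finType} (e : rel T) :=
  forall s : seq T, [/\ 3 <= size s, uniq s & cycle e s] -> odd (size s) -> size s <= 3.
Definition maxm {T : finType} (e m : rel T) :=
  matching e m /\ forall n, matching e n -> #|cov n| <= #|cov m|.
Definition nedges {T : finType} (e : rel T) := #|[set p : T * T | e p.1 p.2]|.

Lemma even_cov {T : finType} (e m : rel T) : irreflexive e -> matching e m -> ~~ odd #|cov m|.
Proof.
move=> ie; move: {2}#|cov m| (erefl #|cov m|) => k; elim/ltn_ind: k m => k IH m Hk Hm.
case: (set_0Vmem (cov m)) => [E|[x Hx]]; first by rewrite E cards0.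
have [y Hxy] := covE Hx.
have Hne : x != y by apply/negP => /eqP E; have [s1 _ _] := Hm; have := s1 _ _ Hxy; rewrite E ie.
have C := card_cov_delv Hm Hxy Hne.
have H := IH #|cov (delv m x)| _ (delv m x) (erefl _) (matching_delv' x Hm).
rewrite -C addn2 /= negbK; apply: H; move: C Hk; move: #|cov (delv m x)| #|cov m| => p q; lia.
Qed.

Lemma nolong_sub {T : finType} (e e' : rel T) : subrel e' e -> nolong e -> nolong e'.
Proof. move=> H nl s [H1 H2 H3]; apply: nl; split => //; exact: sub_cycle H3. Qed.

Lemma nedges_lt {T : finType} (e e' : rel T) x y : subrel e' e -> e x y -> ~~ e' x y ->
  nedges e' < nedges e.
Proof.
move=> Hs Hxy Hn; apply: proper_card; apply/properP; split.
- by apply/subsetP => p; rewrite !inE => /Hs.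
- by exists (x, y); rewrite !inE.
Qed.

Lemma AP_contra {T : finType} (e m : rel T) x s : symmetric e -> maxm e m -> AP e m x s -> False.
Proof.
move=> se [Hm Hmax] HA; have [n [Hn Hc]] := flip se Hm HA.
by have := Hmax n Hn; rewrite leqNgt Hc.
Qed.

Lemma cycle_contra {T : finType} (e : rel T) x s : nolong e -> uniq (x :: s) -> path e x s ->
  e (last x s) x -> ~~ odd (size s) -> 4 <= size s -> False.
Proof.
move=> nl Hu Hp Hl Ho H4.
have : size (x :: s) <= 3.
  apply: nl; last by rewrite /= Ho.
  split => //.
  - by rewrite /= ltnS; apply: leq_trans _ H4.
  - by rewrite /= rcons_path Hp Hl.
by move=> /=; rewrite ltnS => H; move: (leq_trans H4 H).
Qed.

Lemma exists_maxm {T : finType} (e : rel T) : exists m, maxm e m.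
Proof.
suff H : forall k (m : rel T), matching e m -> #|T| - #|cov m| <= k -> exists m, maxm e m.
  apply: (H #|T| (fun _ _ => false)) => //; last by rewrite leq_subr.
elim=> [|k IH] m Hm Hk.
- exists m; split => // n Hn; have := subset_leq_card (subsetT (cov n)); rewrite cardsT; lia.
- case: (classic (forall n, matching e n -> #|cov n| <= #|cov m|)) => H.
    by exists m.
  have [n Hn] := not_all_ex_not _ _ H.
  have [Hn1 Hn2] := imply_to_and _ _ Hn.
  apply: (IH n Hn1); have := subset_leq_card (subsetT (cov n)); rewrite cardsT; lia.
Qed.

Lemma matching_free {T : finType} (e m : rel T) z : matching e m -> z \notin cov m ->
  matching (delv e z) m.
Proof.
move=> Hm Hz; have [s1 sm um] := Hm.
apply: (matching_sub (e := e)) Hm => a b Hab Heab.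
rewrite /delv Heab /=; apply/andP; split; apply/negP => /eqP E; subst.
- by rewrite (covI Hab) in Hz.
- by rewrite sm in Hab; rewrite (covI Hab) in Hz.
Qed.

Lemma arith4 a b : ~~ odd a -> ~~ odd b -> a < b -> a + 2 <= b.
Proof.
move=> Ha Hb Hab; rewrite addn2; apply: contraTT Hb; rewrite -ltnNge => H.
have -> : b = a.+1 by lia.
by rewrite /= Ha.
Qed.

Lemma arith5 q p c : 2 * q <= p -> p + 2 = c -> 2 * (q + 1) <= c.
Proof. lia. Qed.

Lemma sym_dele {T : finType} (e : rel T) u w : symmetric e -> symmetric (dele e u w).
Proof.
move=> se a b; rewrite /dele se; congr (_ && ~~ _).
by rewrite orbC [(b == u) && _]andbC [(b == w) && _]andbC.
Qed.

Lemma main_ind {T : finType} k : forall e : rel T, nedges e = k ->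
  symmetric e -> irreflexive e -> nolong e -> forall m, maxm e m ->
  exists Q : {set T}, 2 * #|Q| <= #|cov m| /\
    (forall u v, e u v -> ~~ m u v -> (u \in Q) || (v \in Q)).
Proof.
elim/ltn_ind: k => k IH e Hk se ie nl m Hmax.
have [Hm Hmx] := Hmax; have [s1 sm um] := Hm.
case: (classic (exists v, (exists w, e v w) /\
    forall nn, matching (delv e v) nn -> #|cov nn| < #|cov m|)) => [[v [[w0 Hvw0] Hess]]|Hness].
-
  have Hvm : v \in cov m.
    apply: contraT => Hv; have := Hess m (matching_free Hm Hv); by rewrite ltnn.
  have [w Hvw] := covE Hvm.
  have Hvw0' : v != w by apply/negP => /eqP E; have := s1 _ _ Hvw; rewrite E ie.
  set m1 := delv m v.
  have Hm1 : matching (delv e v) m1 by exact: matching_delv.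
  have C1 : #|cov m1| + 2 = #|cov m| by exact: card_cov_delv Hm Hvw Hvw0'.
  have Hmax1 : maxm (delv e v) m1.
    split => // nn Hnn.
    have := arith4 (even_cov (irr_delv v ie) Hnn) (even_cov ie Hm) (Hess nn Hnn).
    rewrite -C1 leq_add2r; done.
  have Hlt : nedges (delv e v) < k.
    rewrite -Hk; apply: (nedges_lt (x := v) (y := w0)) => //.
    - by move=> a b /and3P [].
    - by rewrite /delv eqxx /= andbF.
  have [Q1 [HQ1 HcQ1]] := IH _ Hlt (delv e v) (erefl _) (sym_delv v se) (irr_delv v ie)
      (nolong_sub (fun a b (H : delv e v a b) => (let: conj H' _ := andP H in H')) nl) m1 Hmax1.
  exists (v |: Q1); split.
  + apply: leq_trans (arith5 HQ1 C1); rewrite leq_mul2l /=.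
    by rewrite cardsU1 addnC leq_add2l leq_b1.
  + move=> a b Hab Hmab.
    case: (a =P v) => [->|/eqP Hav]; first by rewrite setU11.
    case: (b =P v) => [->|/eqP Hbv]; first by rewrite setU11 orbT.
    have := HcQ1 a b; rewrite /delv Hab Hav Hbv /m1 /delv (negbTE Hmab) /= => /(_ isT isT).
    by case/orP => H; rewrite !in_setU1 H ?orbT.
- have Hiness : forall v, (exists w, e v w) ->
      exists nn, matching (delv e v) nn /\ #|cov m| <= #|cov nn|.
    move=> v Hv; apply: NNPP => H; apply: Hness; exists v; split => // nn Hnn.
    rewrite ltnNge; apply/negP => H'; apply: H; by exists nn; split.
  case: (classic (exists a b, e a b)) => [[a [b Hab]]|Hno]; last first.
    exists set0; split; first by rewrite cards0.
    by move=> u v Huv; exfalso; apply: Hno; exists u, v.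
  have [z [y [Hz Hzy]]] : exists z y, z \notin cov m /\ e z y.
    apply: NNPP => H.
    have Hall : forall u w, e u w -> u \in cov m.
      move=> u w Huw; case: (boolP (u \in cov m)) => // Hu; exfalso; apply: H; by exists u, w; split.
    have [nn [Hnn Hc]] := Hiness a (ex_intro _ b Hab).
    have Hsub : cov nn \subset cov m :\ a.
      apply/subsetP => u /covE [u' Hu']; have [t1 _ _] := Hnn.
      have /and3P [H1 H2 H3] := t1 _ _ Hu'.
      by rewrite in_setD1 H2 (Hall _ _ H1).
    have Hd := cardsD1 a (cov m); rewrite (Hall _ _ Hab) in Hd.
    have := subset_leq_card Hsub.
    move: Hc Hd; move: #|cov nn| #|cov m :\ a| #|cov m| => p q r; lia.
  have Hzy0 : z != y by apply/negP => /eqP E; move: Hzy; rewrite E ie.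
  have Hym : y \in cov m.
    case: (boolP (y \in cov m)) => // Hy; exfalso; apply: (AP_contra (x := z) (s := [:: y]) se Hmax).
    apply/and5P; split => //=.
    - rewrite Hzy /= andbT eqbF_neg; apply: contra Hz => H; exact: covI H.
    - by rewrite inE Hzy0.
  have [y' Hyy'] := covE Hym.
  have Hyy'0 : y != y' by apply/negP => /eqP E; have := s1 _ _ Hyy'; rewrite E ie.
  have Hzy'0 : z != y' by apply/negP => /eqP E; move: Hz; rewrite E (covI (y:=y)) // sm.
  have Hzy' : e z y'.
    apply: NNPP => Hne.
    have [nn [Hnn Hc]] := Hiness y (ex_intro _ z (etrans (se _ _) Hzy)).
    set m2 := delv m y.
    have Hm2 : matching (delv e y) m2 by exact: matching_delv.
    have C2 : #|cov m2| + 2 = #|cov m| by exact: card_cov_delv Hm Hyy' Hyy'0.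
    have se2 := sym_delv y se.
    have [p [s HA]] : exists p s, AP (delv e y) m2 p s.
      apply: (berge (erefl _) se2 (irr_delv y ie) Hm2 Hnn).
      move: C2 Hc; move: #|cov m2| #|cov m| #|cov nn| => a1 a2 a3; lia.
    have cov2 : cov m2 = cov m :\: [set y; y'] by exact: cov_delv Hm Hyy'.
    have Hyn : forall v, v \in p :: s -> v != y.
      move=> v Hv; apply: (avoid_delv se2 HA _ Hv) => u; by rewrite /delv eqxx /= andbF.
    have m2eq : forall u v, u != y -> v != y -> m2 u v = m u v.
      by move=> u v H1 H2; rewrite /m2 /delv H1 H2 !andbT.
    have e2sub : forall u v, delv e y u v -> e u v by move=> u v /and3P [].
    have Hfree : forall v, v != y -> v != y' -> v \notin cov m2 -> v \notin cov m.
      by move=> v H1 H2; rewrite cov2 in_setD in_set2 (negbTE H1) (negbTE H2).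
    have sm2 : symmetric m2 by case: Hm2.
    case: (boolP (y' \in p :: s)) => Hy'p; last first.
      have [_ _ _ Hp Hl] := and5P HA.
      apply: (AP_contra se Hmax (x := p) (s := s)).
      apply: (AP_lift (e' := delv e y) (m' := m2)) => //.
      - by move=> u v _ _; exact: e2sub.
      - by move=> u v Hu Hv; apply: m2eq; apply: Hyn.
      - apply: Hfree => //; first by apply: Hyn; exact: mem_head.
        by apply/negP => /eqP E; move: Hy'p; rewrite -E mem_head.
      - apply: Hfree => //; first by apply: Hyn; exact: mem_last.
        by apply/negP => /eqP E; move: Hy'p; rewrite -E mem_last.
    have Hy'2 : y' \notin cov m2 by rewrite cov2 in_setD in_set2 eqxx orbT.
    have [s0 [HA0 Hmem]] := AP_endpoint se2 sm2 HA Hy'p Hy'2.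
    have [H1 H2 H3 H4 H5] := and5P HA0.
    case: s0 HA0 Hmem H1 H2 H3 H4 H5 => [|q r] HA0 Hmem H1 H2 H3 H4 H5 //.
    have Hyn0 : y \notin [:: y', q & r].
      by apply/negP => H; have := Hyn y; rewrite -Hmem H eqxx => /(_ isT).
    case: (last q r =P z) => [Hlz|Hlz].
    + case: r HA0 Hmem H1 H2 H3 H4 H5 Hyn0 Hlz => [|q' r] HA0 Hmem H1 H2 H3 H4 H5 Hyn0 Hlz.
        move: H1 => /= /and3P [Hq _ _]; rewrite /= in Hlz; rewrite Hlz in Hq.
        by apply: Hne; rewrite se; apply: e2sub Hq.
      apply: (cycle_contra (x := y) (s := [:: y', q, q' & r]) nl) => //.
      * by rewrite cons_uniq Hyn0 H3.
      * by rewrite /= (s1 _ _ Hyy') /=; apply: sub_path (altw_path H1) => u v; exact: e2sub.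
      * by move: Hlz; rewrite /= => ->.
      * by move: H2; rewrite /= !negbK.
      * by move: H2; rewrite /= !negbK; case: (size r).
    + apply: (AP_contra se Hmax (x := z) (s := [:: y, y', q & r])).
      have Hlq : last q r \in q :: r by exact: mem_last.
      have Hy'qr : y' \notin q :: r by move: H3; rewrite cons_uniq => /andP [].
      apply/and5P; split => //.
      * have Ht : altw e m false y' (q :: r).
          apply: (altw_lift (e' := delv e y) (m' := m2)) H1 => u v Hu Hv.
          - exact: e2sub.
          - apply: m2eq; apply/negP => /eqP E; subst; by rewrite ?Hu ?Hv in Hyn0.
        rewrite /= Hzy (s1 _ _ Hyy') Hyy' /=; move: Ht => /= /and3P [-> -> ->]; rewrite andbT.
        by rewrite andbT eqbF_neg; apply: contra Hz => H; exact: covI H.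
      * by move: H2; rewrite /= !negbK.
      * rewrite cons_uniq; apply/andP; split; last by rewrite cons_uniq Hyn0 H3.
        rewrite in_cons negb_or Hzy0 /= in_cons negb_or Hzy'0 /=.
        apply/negP => Hzq; move: Hz; rewrite -[z \in cov m]negbK => /negP; apply.
        have Hz2 : z \in cov m2.
          apply: (altw_inner sm2 H1 H2) => //.
          by rewrite /=; apply/eqP => E; apply: Hlz.
        by move: Hz2; rewrite cov2 in_setD => /andP [_ ->].
      * rewrite /=; apply: Hfree => //.
        - by apply: Hyn; rewrite -Hmem in_cons Hlq orbT.
        - by apply/negP => /eqP E; move: Hy'qr; rewrite -E Hlq.
  set m1 := delv m y.
  set e1 := dele (delv e z) y y'.
  have e1sub : forall u v, e1 u v -> e u v by move=> u v /andP [/and3P []].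
  have se1 : symmetric e1 by apply: sym_dele; apply: sym_delv.
  have ie1 : irreflexive e1 by move=> u; apply/negP => /e1sub; rewrite ie.
  have Hm1 : matching e1 m1.
    apply: (matching_sub (e := delv e z)); last first.
      by apply: matching_delv'; apply: matching_free.
    move=> a1 b1 /and3P [_ Ha Hb] H; rewrite /e1 /dele H /=.
    by rewrite (negbTE Ha) (negbTE Hb) /= andbF.
  have cov1 : cov m1 = cov m :\: [set y; y'] by exact: cov_delv Hm Hyy'.
  have C1 : #|cov m1| + 2 = #|cov m| by exact: card_cov_delv Hm Hyy' Hyy'0.
  have Hfree1 : forall v, v != y -> v != y' -> v \notin cov m1 -> v \notin cov m.
    by move=> v H1 H2; rewrite cov1 in_setD in_set2 (negbTE H1) (negbTE H2).
  have m1eq : forall u v, u != y -> v != y -> m1 u v = m u v.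
    by move=> u v H1 H2; rewrite /m1 /delv H1 H2 !andbT.
  have Hy1 : y \notin cov m1 by rewrite cov1 in_setD in_set2 eqxx.
  have Hy'1 : y' \notin cov m1 by rewrite cov1 in_setD in_set2 eqxx orbT.
  have sm1 : symmetric m1 by case: Hm1.
  have Hmz : m z y == false by rewrite eqbF_neg; apply: contra Hz => H; exact: covI H.
  have Hmz' : m z y' == false by rewrite eqbF_neg; apply: contra Hz => H; exact: covI H.
  have Hmax1 : maxm e1 m1.
    split => // nn Hnn; rewrite leqNgt; apply/negP => Hlt.
    have [p [s HA]] := berge (erefl _) se1 ie1 Hm1 Hnn Hlt.
    have Hzn : forall v, v \in p :: s -> v != z.
      move=> v Hv; apply: (avoid_delv se1 HA _ Hv) => u.
      by rewrite /e1 /dele /delv eqxx /= andbF.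
    have Hzy1 : e z y by [].
    case: (boolP (y \in p :: s)) => Hyp.
    - have [s0 [HA0 Hmem]] := AP_endpoint se1 sm1 HA Hyp Hy1.
      have [H1 H2 H3 H4 H5] := and5P HA0.
      case: s0 HA0 Hmem H1 H2 H3 H4 H5 => [|q r] HA0 Hmem H1 H2 H3 H4 H5 //.
      have Hzn0 : z \notin [:: y, q & r].
        by apply/negP => H; have := Hzn z; rewrite -Hmem H eqxx => /(_ isT).
      have Hlq : last q r \in q :: r by exact: mem_last.
      have Hyqr : y \notin q :: r by move: H3; rewrite cons_uniq => /andP [].
      case: (boolP (y' \in q :: r)) => Hy'qr.
      + have Hy'l : y' = last q r.
          apply/eqP; apply: contraNT Hy'1 => Hne.
          exact: (altw_inner sm1 H1 H2).
        case: r HA0 Hmem H1 H2 H3 H4 H5 Hzn0 Hlq Hyqr Hy'qr Hy'l => [|q' r] HA0 Hmem H1 H2 H3 H4 H5 Hzn0 Hlq Hyqr Hy'qr Hy'l.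
          move: H1 => /= /and3P [Hq _ _]; rewrite /= in Hy'l; rewrite -Hy'l in Hq.
          by move: Hq; rewrite /e1 /dele !eqxx /= andbF.
        apply: (cycle_contra (x := z) (s := [:: y, q, q' & r]) nl) => //.
        * by rewrite cons_uniq Hzn0.
        * by rewrite /= Hzy /=; apply: sub_path (altw_path H1) => u v; exact: e1sub.
        * by move: Hy'l; rewrite /= => <-; rewrite se.
        * by move: H2; rewrite /= !negbK.
        * by move: H2; rewrite /= !negbK; case: (size r).
      + apply: (AP_contra se Hmax (x := z) (s := [:: y', y, q & r])).
        have Ht : altw e m false y (q :: r).
          apply: (altw_lift (e' := e1) (m' := m1)) H1 => u v Hu Hv.
          - exact: e1sub.
          - have Hy'L : y' \notin y :: q :: r by rewrite in_cons negb_or eq_sym Hyy'0.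
            case: (u =P y) => [Eu|/eqP Hu']; case: (v =P y) => [Ev|/eqP Hv'].
            + by subst; rewrite /m1 /delv eqxx /= andbF; apply/esym/negP => H; have := s1 _ _ H; rewrite ie.
            + subst; rewrite /m1 /delv eqxx /= andbF; apply/esym/negP => H.
              by move: Hy'L; rewrite (um _ _ _ Hyy' H) Hv.
            + subst; rewrite /m1 /delv eqxx /= !andbF; apply/esym/negP => H.
              by rewrite sm in H; move: Hy'L; rewrite (um _ _ _ Hyy' H) Hu.
            + exact: m1eq.
        apply/and5P; split => //.
        * rewrite /= Hzy' Hmz' se (s1 _ _ Hyy') sm Hyy' /=; move: Ht => /= /and3P [-> -> ->].
          done.
        * by move: H2; rewrite /= !negbK.
        * rewrite cons_uniq in_cons negb_or Hzy'0 Hzn0 cons_uniq H3 andbT.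
          by rewrite in_cons negb_or [y' == y]eq_sym Hyy'0 Hy'qr.
        * rewrite /=; apply: Hfree1 => //.
          - by apply/negP => /eqP E; move: Hyqr; rewrite -E Hlq.
          - by apply/negP => /eqP E; move: Hy'qr; rewrite -E Hlq.
    - have m1eqP : forall u v, u \in p :: s -> v \in p :: s -> m1 u v = m u v.
        move=> u v Hu Hv; apply: m1eq; apply/negP => /eqP E; subst;
          by rewrite ?Hu ?Hv in Hyp.
      case: (boolP (y' \in p :: s)) => Hy'p; last first.
        have [_ _ _ Hp Hl] := and5P HA.
        apply: (AP_contra se Hmax (x := p) (s := s)).
        apply: (AP_lift (e' := e1) (m' := m1)) => //.
        + by move=> u v _ _; exact: e1sub.
        + apply: Hfree1 => //.
          * by apply/negP => /eqP E; move: Hyp; rewrite -E mem_head.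
          * by apply/negP => /eqP E; move: Hy'p; rewrite -E mem_head.
        + apply: Hfree1 => //.
          * by apply/negP => /eqP E; move: Hyp; rewrite -E mem_last.
          * by apply/negP => /eqP E; move: Hy'p; rewrite -E mem_last.
      have [s0 [HA0 Hmem]] := AP_endpoint se1 sm1 HA Hy'p Hy'1.
      have [H1 H2 H3 H4 H5] := and5P HA0.
      case: s0 HA0 Hmem H1 H2 H3 H4 H5 => [|q r] HA0 Hmem H1 H2 H3 H4 H5 //.
      have Hzn0 : z \notin [:: y', q & r].
        by apply/negP => H; have := Hzn z; rewrite -Hmem H eqxx => /(_ isT).
      have Hyn0 : y \notin [:: y', q & r] by rewrite Hmem.
      have Hlq : last q r \in q :: r by exact: mem_last.
      have Hy'qr : y' \notin q :: r by move: H3; rewrite cons_uniq => /andP [].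
      apply: (AP_contra se Hmax (x := z) (s := [:: y, y', q & r])).
      have Ht : altw e m false y' (q :: r).
        apply: (altw_lift (e' := e1) (m' := m1)) H1 => u v Hu Hv.
        + exact: e1sub.
        + by apply: m1eqP; rewrite -Hmem.
      apply/and5P; split => //.
      + rewrite /= Hzy Hmz (s1 _ _ Hyy') Hyy' /=; move: Ht => /= /and3P [-> -> ->].
        done.
      + by move: H2; rewrite /= !negbK.
      + rewrite cons_uniq in_cons negb_or Hzy0 Hzn0 cons_uniq Hyn0 H3.
        done.
      + rewrite /=; apply: Hfree1 => //.
        * by apply/negP => /eqP E; move: Hyn0; rewrite -E in_cons Hlq orbT.
        * by apply/negP => /eqP E; move: Hy'qr; rewrite -E Hlq.
  have Hlt : nedges e1 < k.
    rewrite -Hk; apply: (nedges_lt (x := z) (y := y)) => //.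
    by rewrite /e1 /dele /delv eqxx /= andbF.
  have [Q1 [HQ1 HcQ1]] := IH _ Hlt e1 (erefl _) se1 ie1
      (nolong_sub e1sub nl) m1 Hmax1.
  exists (z |: Q1); split.
  + apply: leq_trans (arith5 HQ1 C1); rewrite leq_mul2l /=.
    by rewrite cardsU1 addnC leq_add2l leq_b1.
  + move=> a2 b2 Ha2b2 Hmab.
    case: (a2 =P z) => [->|/eqP Ha2z]; first by rewrite setU11.
    case: (b2 =P z) => [->|/eqP Hb2z]; first by rewrite setU11 orbT.
    have Hp : ~~ ((a2 == y) && (b2 == y') || (a2 == y') && (b2 == y)).
      apply/negP => /orP [] /andP [/eqP Ea /eqP Eb]; subst; move: Hmab.
      - by rewrite Hyy'.
      - by rewrite sm Hyy'.
    have He1 : e1 a2 b2 by rewrite /e1 /dele /delv Ha2b2 Ha2z Hb2z Hp.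
    have Hm1ab : ~~ m1 a2 b2 by rewrite /m1 /delv (negbTE Hmab).
    by case/orP: (HcQ1 a2 b2 He1 Hm1ab) => H; rewrite !in_setU1 H ?orbT.
Qed.

Lemma pair_eq {T : finType} (m : rel T) x y u v w : symmetric m ->
  (forall a b c, m a b -> m a c -> b = c) -> m x y -> m u v ->
  w \in [set x; y] -> w \in [set u; v] -> [set x; y] = [set u; v].
Proof.
move=> sm um Hxy Huv; rewrite !in_set2.
have swap : forall a b : T, [set a; b] = [set b; a].
  by move=> a b; apply/setP => t; rewrite !in_set2 orbC.
move=> /orP [] /eqP Ew /orP [] /eqP Ew'.
- have E : u = x by rewrite -Ew' Ew.
  by rewrite E in Huv; rewrite E (um _ _ _ Hxy Huv).
- have E : v = x by rewrite -Ew' Ew.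
  rewrite E sm in Huv; by rewrite E (um _ _ _ Hxy Huv) swap.
- have E : u = y by rewrite -Ew' Ew.
  rewrite sm in Hxy; rewrite E in Huv; by rewrite E (um _ _ _ Hxy Huv) swap.
- have E : v = y by rewrite -Ew' Ew.
  rewrite sm in Hxy; rewrite E sm in Huv; by rewrite E (um _ _ _ Hxy Huv).
Qed.

Theorem proposition4p8 (T : finType) (e : rel T) :
  simple_graph e ->
  (forall s : seq T, is_cycle e s -> odd (size s) -> size s <= 3) ->
  weak_KE e.
Proof.
case=> se ie nl.
have nl' : nolong e by move=> s Hs Ho; apply: nl.
have [m Hmax] := exists_maxm e.
have [Q [HQ HcQ]] := main_ind (erefl _) se ie nl' Hmax.
have [Hm _] := Hmax; have [s1 sm um] := Hm.
pose M : {set {set T}} := [set E : {set T} | [exists x, exists y, m x y && (E == [set x; y])]].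
have inM : forall E, reflect (exists x y, m x y /\ E = [set x; y]) (E \in M).
  move=> E; rewrite inE; apply: (iffP existsP) => [[x /existsP [y /andP [H /eqP ->]]]|[x [y [H ->]]]].
  - by exists x, y.
  - by exists x; apply/existsP; exists y; rewrite H eqxx.
exists M, Q; split.
- split.
  + by move=> E /inM [x [y [H ->]]]; exists x, y; split => //; apply: s1.
  + move=> E F /inM [x [y [Hxy ->]]] /inM [u [v [Huv ->]]] Hne.
    rewrite -setI_eq0; apply/eqP/setP => w; rewrite in_setI in_set0.
    apply/negP => /andP [H1 H2]; move: Hne.
    by rewrite (pair_eq sm um Hxy Huv H1 H2) eqxx.
- have H1 : #|cov m| <= #|cover M|.
    apply: subset_leq_card; apply/subsetP => x /covE [y Hxy].
    apply/bigcupP; exists [set x; y]; first by apply/inM; exists x, y.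
    by rewrite in_set2 eqxx.
  have H2 : #|cover M| <= \sum_(A in M) #|A| by exact: leq_of_leqif (leq_card_cover M).
  have H3 : \sum_(A in M) #|A| <= \sum_(A in M) 2.
    apply: leq_sum => A /inM [x [y [_ ->]]]; by rewrite cards2; case: (x != y).
  rewrite sum_nat_const in H3.
  move: HQ H1 H2 H3; move: #|Q| #|cov m| #|cover M| (\sum_(A in M) #|A|) #|M| => a b c d f; lia.
- move=> u v Huv HM; apply: HcQ => //; apply/negP => H; apply/negP: HM; apply/negPn.
  by apply/inM; exists u, v.
Qed.
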